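(* For each odd prime $p$ there are infinitely many primes $q$ with $q\equiv1\pmod p$ such that $q\not\equiv1\pmod{p^2}$ and $p$ is not a $p$-th power modulo $q$. *)

(* Defs.v *)
From mathcomp Require Import all_boot.

Definition pth_power_mod (p a q : nat) : Prop :=
  exists x : nat, x ^ p = a %[mod q].

(* Main.v *)
Require Import Defs.
From mathcomp Require Import all_boot.
From mathcomp Require Import zify cyclic.

Lemma pow_gcd {q a m n} : 0 < m -> a ^ m = 1 %[mod q] -> a ^ n = 1 %[mod q] ->
  a ^ (gcdn m n) = 1 %[mod q].
Proof.
move=> m0 Hm Hn.
have e1 : forall k t, a ^ t = 1 %[mod q] -> a ^ (k * t) = 1 %[mod q].
  by move=> k t H; rewrite mulnC expnM -modnXm H modnXm exp1n.
case: (egcdnP n m0) => km kn E _.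
have := e1 km m Hm; rewrite E expnD -modnMml (e1 kn n Hn) modnMml mul1n.
by [].
Qed.

Lemma geom a n : 0 < a -> a ^ n = 1 + (a - 1) * \sum_(i < n) a ^ i.
Proof.
move=> a0; elim: n => [|n IH]; first by rewrite big_ord0 muln0.
rewrite big_ord_recr /= mulnDr addnA -IH expnS.
move: (a ^ n) => t; nia.
Qed.

Lemma sumS a n : \sum_(i < n.+1) a ^ i = 1 + a * \sum_(i < n) a ^ i.
Proof.
rewrite big_ord_recl expn0 big_distrr; congr (_ + _).
by apply: eq_bigr => i _; rewrite /= expnS.
Qed.

Lemma bad_factor m n : 0 < n -> n != 1 %[mod m] ->
  exists r, [/\ prime r, r %| n & r != 1 %[mod m]].
Proof.
elim/ltn_ind: n => n IH n0 ne1.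
have n1 : 1 < n.
  by case: n IH n0 ne1 => [|[|n]] // _ _; rewrite eqxx.
have rP := pdiv_prime n1; have rd := pdiv_dvd n.
case hr: (pdiv n == 1 %[mod m]); last by exists (pdiv n); rewrite hr.
have r0 : 0 < pdiv n by exact: prime_gt0.
have nE : n = pdiv n * (n %/ pdiv n) by rewrite mulnC divnK.
have d0 : 0 < n %/ pdiv n by rewrite divn_gt0 // dvdn_leq.
have dlt : n %/ pdiv n < n by rewrite ltn_Pdiv // prime_gt1.
have ne1' : n %/ pdiv n != 1 %[mod m].
  apply: contra ne1 => /eqP h; apply/eqP.
  by rewrite nE -modnMml (eqP hr) modnMml mul1n h.
have [r [rp rd' rn]] := IH _ dlt d0 ne1'.
exists r; split => //; rewrite nE; exact: dvdn_mull.
Qed.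

Theorem proposition5p4 (p : nat) (hp : prime p) (hodd : odd p) :
  forall N : nat, exists q : nat,
    [/\ N < q, prime q, q = 1 %[mod p], q != 1 %[mod p ^ 2]
      & ~ pth_power_mod p p q].
Proof.
move=> N0.
have p1 := prime_gt1 hp; have p0 := prime_gt0 hp.
pose c := \prod_(i < N0.+1 | ~~ (p %| i)) i.
have hc : ~~ (p %| c).
  by rewrite /c Euclid_dvd_prod // big1 // => i /negbTE.
have hsmall : forall r, prime r -> r <= N0 -> r != p -> r %| c.
  move=> r rP rle rp; have rlt : r < N0.+1 by rewrite ltnS.
  rewrite /c (bigD1 (Ordinal rlt)) /=; last by rewrite dvdn_prime2 // eq_sym.
  exact: dvdn_mulr.
have c0 : 0 < c by case: (c) hc => //; rewrite dvdn0.
pose a := p * c ^ p.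
have a0 : 0 < a by rewrite /a muln_gt0 p0 expn_gt0 c0.
have pa : p %| a by apply: dvdn_mulr.
pose Nn := \sum_(i < p) a ^ i.
have [k pk] : exists k, p = k.+2 by case: (p) p1 => [|[|k]] // _; exists k.
have hNa : Nn = 1 + a * \sum_(i < p.-1) a ^ i by rewrite /Nn pk sumS.
have hN2 : Nn = 1 + a + a * a * \sum_(i < k) a ^ i.
  by rewrite /Nn pk sumS sumS mulnDr muln1 mulnA addnA.
have Nn0 : 0 < Nn by rewrite hNa.
have Nne : Nn != 1 %[mod p ^ 2].
  rewrite eqn_mod_dvd; last by rewrite hNa leq_addr.
  rewrite hN2 -addnA addKn dvdn_addl; last first.
    by apply: dvdn_mulr; rewrite expnS expn1; apply: dvdn_mul.
  by rewrite /a expnS expn1 dvdn_pmul2l // Euclid_dvdX // (negbTE hc).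
have [q [qP qN qn1]] := @bad_factor (p ^ 2) Nn Nn0 Nne.
have q1 := prime_gt1 qP.
have hqa : ~~ (q %| a).
  apply/negP => qa; move: qN; rewrite hNa dvdn_addl; last exact: dvdn_mulr.
  rewrite dvdn1 => /eqP q1'.
  by rewrite q1' in q1.
have hap : a ^ p = 1 %[mod q].
  rewrite (@geom a p a0) -/Nn.
  move: qN => /dvdnP [t ->].
  by rewrite mulnA -modnDmr modnMl addn0.
have hqp : coprime a q by rewrite coprime_sym prime_coprime.
have ferm : forall y, coprime y q -> y ^ q.-1 = 1 %[mod q].
  by move=> y hy; rewrite -totient_prime // Euler_exp_totient.
have ha1 : a %% q != 1 %% q.
  apply/negP => /eqP ha.
  have hs : Nn %% q = p %% q.
    rewrite /Nn -modn_summ (eq_bigr (fun _ => 1)) ?sum_nat_const ?card_ord ?muln1 // => i _.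
    by rewrite -modnXm ha modnXm exp1n modn_small.
  have : q %| p by rewrite /dvdn -hs; exact: qN.
  rewrite dvdn_prime2 // => /eqP qp.
  by apply: (negP hqa); rewrite qp.
have pq : p %| q.-1.
  have := pow_gcd p0 hap (ferm _ hqp).
  case: (boolP (p %| q.-1)) => // npq.
  rewrite (_ : gcdn p q.-1 = 1) ?expn1 => [h|]; first by rewrite h eqxx in ha1.
  by apply/eqP; rewrite -/(coprime p q.-1) prime_coprime.
have hq1 : q = 1 %[mod p] by apply/eqP; rewrite eqn_mod_dvd ?subn1 // prime_gt0.
have [m qm] := dvdnP pq.
have npm : ~~ (p %| m).
  apply/negP => /dvdnP [t tm]; apply: (negP qn1).
  rewrite eqn_mod_dvd ?(ltnW q1) // subn1 qm tm -mulnA expnS expn1.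
  exact: dvdn_mull.
exists q; split => //.
- rewrite ltnNge; apply/negP => hle; apply: (negP hqa).
  have qp : q != p by apply: contraNneq hqa => ->.
  by apply: dvdn_mull; apply: dvdn_exp p0 _; apply: hsmall.
- move=> [x hx]; pose y := x * c.
  have hy : y ^ p = a %[mod q] by rewrite /y expnMn -modnMml hx modnMml.
  have yq : coprime y q.
    rewrite coprime_sym prime_coprime //; apply/negP => qy; apply: (negP hqa).
    by move: (dvdn_exp p0 qy); rewrite /dvdn hy.
  have h1 : y ^ (p * p) = 1 %[mod q] by rewrite expnM -modnXm hy modnXm hap.
  have h2 := pow_gcd (_ : 0 < p * p) h1 (ferm y yq).
  rewrite qm -muln_gcdl in h2.
  have cpm : coprime p m by rewrite prime_coprime.
  rewrite (eqP cpm) mul1n in h2.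
  by move: ha1; rewrite -hy h2 ?eqxx // muln_gt0 p0.
Qed.
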